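(* Let $n\ge5$, $x_1,\dots,x_{n-1}>0$, $\gamma,\delta>0$ with $\gamma\ne1\ne\delta$, $x_0=1$, and let $\mathbf{R}$ be the $n\times n$ matrix with entries $r_{ij}=x_{j-1}/x_{i-1}$ except $r_{12}=\delta x_1$, $r_{21}=1/(\delta x_1)$, $r_{34}=\gamma x_3/x_2$, $r_{43}=x_2/(\gamma x_3)$. Let $\mathbf{w}^{EM}$ be its principal right eigenvector. Then for $i=5,\dots,n$: $\delta>1$ iff $w_2^{EM}/w_i^{EM}<x_{i-1}/x_1$, and $\delta<1$ iff $w_2^{EM}/w_i^{EM}>x_{i-1}/x_1$.
   Context: The principal right eigenvector is the positive (Perron) eigenvector belonging to the largest eigenvalue. *)

(* Defs.v *)
From HB Require Import structures.
From mathcomp Require Import all_boot all_order all_algebra.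
Set Implicit Arguments. Unset Strict Implicit. Unset Printing Implicit Defensive.
Import Order.TTheory GRing.Theory Num.Theory.
Local Open Scope ring_scope.

(* Indices are 0-based: row/column i : 'I_n corresponds to paper index i+1.
   x : nat -> R with x 0 = 1 stands for x_0, x_1, ..., x_{n-1}.
   Paper entry r_{ij} = x_{j-1}/x_{i-1} becomes (Rmat) i j = x j / x i. *)
Definition Rmat (R : fieldType) (n : nat) (x : nat -> R) (g d : R) : 'M[R]_n :=
  \matrix_(i < n, j < n)
    if ((i : nat) == 0%N) && ((j : nat) == 1%N) then d * x 1%N
    else if ((i : nat) == 1%N) && ((j : nat) == 0%N) then (d * x 1%N)^-1
    else if ((i : nat) == 2%N) && ((j : nat) == 3%N) then g * x 3%N / x 2%N
    else if ((i : nat) == 3%N) && ((j : nat) == 2%N) then x 2%N / (g * x 3%N)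
    else x j / x i.

Definition principal_right_eigenvector (R : realFieldType) (n : nat)
  (A : 'M[R]_n) (w : 'cV[R]_n) : Prop :=
  (forall i, 0 < w i 0) /\
  exists lambda : R, A *m w = lambda *: w /\
    (forall mu : R, eigenvalue A mu -> mu <= lambda).

(* Main.v *)
Require Import Defs.
From HB Require Import structures.
From mathcomp Require Import all_boot all_order all_algebra.
From mathcomp Require Import ring.
Import Order.TTheory GRing.Theory Num.Theory.
Local Open Scope ring_scope.

Theorem mainTheorem18 (R : realFieldType) (n : nat) (x : nat -> R) (g d : R)
  (w : 'cV[R]_n) :
  (5 <= n)%N ->
  x 0%N = 1 ->
  (forall k : nat, (0 < k < n)%N -> 0 < x k) ->
  0 < g -> g != 1 -> 0 < d -> d != 1 ->
  principal_right_eigenvector (Rmat n x g d) w ->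
  forall i j : 'I_n, (j : nat) = 1%N -> (4 <= i)%N ->
    (1 < d <-> w j 0 / w i 0 < x i / x 1%N) /\
    (d < 1 <-> x i / x 1%N < w j 0 / w i 0).
Proof.
move=> n5 x0 xpos gpos g1 dpos d1 [wpos [l [Hl _]]] i j ej i4.
have xp : forall k : 'I_n, 0 < x k.
  move=> k; case: (posnP k) => [->|kp]; first by rewrite x0.
  by apply: xpos; rewrite kp ltn_ord.
have row : forall k : 'I_n, \sum_m Rmat n x g d k m * w m 0 = l * w k 0.
  move=> k; have := congr1 (fun M : 'cV[R]_n => M k 0) Hl; rewrite !mxE => <-.
  by apply: eq_bigr => m _; rewrite mxE.
have h0 : (0 < n)%N by apply: leq_trans n5.
pose i0 : 'I_n := Ordinal h0.
pose rest := \sum_(m < n | m != i0) x m * w m 0.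
have restp : 0 <= rest.
  by apply: sumr_ge0 => m _; apply: mulr_ge0; apply: ltW; [apply: xp|apply: wpos].
have Ei : l * w i 0 = (w i0 0 + rest) / x i.
  rewrite -row (bigD1 i0) //= /rest mulrDl big_distrl /=; congr (_ + _).
    rewrite mxE /= x0 mul1r.
    have -> : ((i : nat) == 0%N) = false by apply/eqP => e; rewrite e in i4.
    have -> : ((i : nat) == 1%N) = false by apply/eqP => e; rewrite e in i4.
    have -> : ((i : nat) == 2%N) = false by apply/eqP => e; rewrite e in i4.
    have -> : ((i : nat) == 3%N) = false by apply/eqP => e; rewrite e in i4.
    by rewrite mulrC.
  apply: eq_bigr => m _; rewrite mxE.
  have -> : ((i : nat) == 0%N) = false by apply/eqP => e; rewrite e in i4.
  have -> : ((i : nat) == 1%N) = false by apply/eqP => e; rewrite e in i4.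
  have -> : ((i : nat) == 2%N) = false by apply/eqP => e; rewrite e in i4.
  have -> : ((i : nat) == 3%N) = false by apply/eqP => e; rewrite e in i4.
  by rewrite /= mulrAC.
have E1 : l * w j 0 = (w i0 0 / d + rest) / x 1%N.
  rewrite -row (bigD1 i0) //= /rest mulrDl big_distrl /=; congr (_ + _).
    by rewrite mxE /= ej /= invfM mulrC mulrA.
  apply: eq_bigr => m /= hm; rewrite mxE ej /=.
  have -> : ((m : nat) == 0%N) = false by apply/negbTE.
  by rewrite /= mulrAC.
have x1p : 0 < x 1%N by apply: xpos; rewrite /= (leq_trans _ n5).
have xip := xp i.
have wip := wpos i.
have w0p := wpos i0.
have lp : 0 < l.
  have : 0 < l * w i 0 by rewrite Ei divr_gt0 // ltr_pwDl.
  by rewrite pmulr_lgt0.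
have Ei' : l * (x i * w i 0) = w i0 0 + rest.
  by rewrite mulrCA Ei mulrC divfK ?gt_eqF.
have E1' : l * (x 1%N * w j 0) = w i0 0 / d + rest.
  by rewrite mulrCA E1 mulrC divfK ?gt_eqF.
have key : l * (x i * w i 0 - x 1%N * w j 0) = w i0 0 * (1 - d^-1).
  rewrite mulrBr Ei' E1'; ring.
have cmp : forall a b : R, (a / w i 0 < b / x 1%N) = (a * x 1%N < b * w i 0).
  by move=> a b; rewrite ltr_pdivrMr // mulrAC ltr_pdivlMr.
have cmp2 : forall a b : R, (b / x 1%N < a / w i 0) = (b * w i 0 < a * x 1%N).
  by move=> a b; rewrite ltr_pdivrMr // mulrAC ltr_pdivlMr.
rewrite cmp cmp2.
have s1 : (1 < d) = (0 < x i * w i 0 - x 1%N * w j 0).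
  by rewrite -(pmulr_rgt0 _ lp) key pmulr_rgt0 // subr_gt0 invf_lt1.
have s2 : (d < 1) = (x i * w i 0 - x 1%N * w j 0 < 0).
  by rewrite -(pmulr_rlt0 _ lp) key pmulr_rlt0 // subr_lt0 invf_gt1.
rewrite s1 s2 subr_gt0 subr_lt0 [w j 0 * _]mulrC [x i * _]mulrC.
by split; split.
Qed.
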